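(* Let $B$ be a bipartite caching graph (with left vertex set the users and right vertex set the $F$ subfile indices) defining a caching scheme on a broadcast network whose server holds $N$ files. Let $N'\le N$ and let $U=\{k_j:j\in[N']\}$ be any set of $N'$ distinct user vertices of $B$. For $j\in[N']$ let $\rho_j$ be the number of right vertices of $B$ adjacent to every vertex of $\{k_i:i\in[j]\}$. If $\tilde R^*$ denotes the infimum of all achievable rates for the caching scheme defined by $B$, then $$\tilde R^*F\ge\sum_{j=1}^{N'}\rho_j.$$
   Context: Coded caching setup: a server holds $N$ files $W_1,\dots,W_N$, each consisting of $F$ subfiles $W_{i,f}$ ($f\in\mathcal{F}$, $|\mathcal{F}|=F$); all subfiles are independent and uniformly distributed over a finite abelian group $\mathcal{A}$, and entropies are measured with logarithm base $|\mathcal{A}|$, so each subfile has entropy $1$. The server is connected to the users by an error-free broadcast link. A bipartite caching graph is a bipartite graph with the users as left vertices, the subfile indices $\mathcal{F}$ as right vertices, and all left vertices of the same degree; it defines the symmetric caching scheme in which user $k$ caches $W_{i,f}$ for all $i\in[N]$ if $\{k,f\}$ is not an edge, and caches no $W_{i,f}$ if $\{k,f\}$ is an edge. Given this caching, a rate $R$ is achievable if there is a (possibly nonlinear) delivery scheme which, for every demand vector (each user demanding one file), broadcasts a message of total size $RF$ (in subfile units, i.e. entropy at most $RF$) from which every user recovers its demanded file using its cache contents. *)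

(* Defs.v *)
From mathcomp Require Import all_boot all_order all_algebra.
From mathcomp Require Import all_classical all_reals all_analysis.
Set Implicit Arguments. Unset Strict Implicit. Unset Printing Implicit Defensive.
Import Order.TTheory GRing.Theory Num.Theory.
Local Open Scope ring_scope.
Local Open Scope classical_set_scope.

(* Users are 'I_K, subfile indices are 'I_F, files are 'I_N.
   A realization of the library is w : files_val N F A, w (i,f) = W_{i,f}. *)
Definition files_val (N F : nat) (A : finZmodType) :=
  {ffun 'I_N * 'I_F -> A}.

Definition caching_graph (K F : nat) (E : 'I_K -> 'I_F -> bool) : Prop :=
  forall k k' : 'I_K, #|[set f | E k f]| = #|[set f | E k' f]|.

(* Cache contents of user k: W_{i,f} for all i when {k,f} is not an edge;
   non-cached positions are blanked to 0 (their location is known). *)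
Definition cache (K N F : nat) (A : finZmodType) (E : 'I_K -> 'I_F -> bool)
  (k : 'I_K) (w : files_val N F A) : files_val N F A :=
  [ffun p : 'I_N * 'I_F => if E k p.2 then 0 else w p].

Definition file (N F : nat) (A : finZmodType) (w : files_val N F A) (i : 'I_N)
  : {ffun 'I_F -> A} := [ffun f => w (i, f)].

(* Entropy (base |A|) of the random variable X(W), W uniform on
   files_val N F A (i.e. all subfiles independent and uniform over A). *)
Definition entropy (R : realType) (N F : nat) (A : finZmodType)
  (X : files_val N F A -> nat) : R :=
  let p := fun m : nat =>
    (#|[set w : files_val N F A | X w == m]|%:R / #|{: files_val N F A}|%:R : R) in
  \sum_(m <- undup [seq X w | w <- enum {: files_val N F A}])
     (- (p m * ln (p m)) / ln (#|{: A}|%:R)).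

(* r is achievable for the caching scheme defined by E: for every demand
   vector d there is a (possibly nonlinear) broadcast message X (a function of
   all files) of entropy at most r*F, from which every user k decodes W_{d k}
   using its cache. *)
Definition achievable (R : realType) (K N F : nat) (A : finZmodType)
  (E : 'I_K -> 'I_F -> bool) (r : R) : Prop :=
  forall d : {ffun 'I_K -> 'I_N},
    exists X : files_val N F A -> nat,
      entropy R X <= r * F%:R /\
      exists dec : 'I_K -> nat -> files_val N F A -> {ffun 'I_F -> A},
        forall (k : 'I_K) (w : files_val N F A),
          dec k (X w) (cache E k w) = file w (d k).

Definition opt_rate (R : realType) (K N F : nat) (A : finZmodType)
  (E : 'I_K -> 'I_F -> bool) : R :=
  inf [set r : R | @achievable R K N F A E r].

(* rho_j (0-indexed j) = number of right vertices adjacent to all of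
   k_0, ..., k_j. *)
Definition rho (K F N' : nat) (E : 'I_K -> 'I_F -> bool) (u : 'I_N' -> 'I_K)
  (j : 'I_N') : nat :=
  #|[set f : 'I_F | [forall i : 'I_N', (i <= j)%N ==> E (u i) f]]|.

(* Main.v *)
Require Import Defs.
From mathcomp Require Import all_boot all_order all_algebra.
From mathcomp Require Import all_classical all_reals all_analysis.
From mathcomp Require Import lra.
Import Order.TTheory GRing.Theory Num.Theory.
Local Open Scope ring_scope.

Lemma part_sum (N F : nat) (A : finZmodType) (X : files_val N F A -> nat) :
  (\sum_(m <- undup [seq X w | w <- enum {: files_val N F A}])
     #|[set w : files_val N F A | X w == m]| = #|{: files_val N F A}|)%N.
Proof.
set s := undup _.
have -> : (\sum_(m <- s) #|[set w : files_val N F A | X w == m]|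
   = \sum_(m <- s) \sum_(w : files_val N F A) (X w == m))%N.
  apply: eq_bigr => m _; rewrite -sum1_card big_mkcond /=.
  by apply: eq_bigr => w _; rewrite inE; case: (X w == m).
rewrite exchange_big /= -sum1_card.
apply: eq_bigr => w _.
have -> : (\sum_(m <- s) (X w == m) = \sum_(m <- s | X w == m) 1)%N.
  by rewrite [RHS]big_mkcond /=; apply: eq_bigr => m _; case: (X w == m).
rewrite sum1_count.
have -> : count (fun m => X w == m) s = count_mem (X w) s.
  by apply: eq_count => m /=; rewrite eq_sym.
rewrite count_uniq_mem ?undup_uniq // mem_undup.
by rewrite (map_f X) ?mem_enum.
Qed.

Lemma term_ge (R : realType) (p a : R) (S : nat) : 1 < a -> 0 <= p ->
  p * a ^+ S <= 1 -> p * S%:R <= - (p * ln p) / ln a.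
Proof.
move=> a1 p0 pa.
have la : 0 < ln a by apply: ln_gt0.
have a0 : 0 < a by apply: lt_trans a1.
rewrite ler_pdivlMr //.
have [->|pp] := eqVneq p 0; first by rewrite !mul0r oppr0.
have pg : 0 < p by rewrite lt_def pp.
have : ln (p * a ^+ S) <= 0 by apply: ln_le0.
rewrite lnM; last 2 first.
- by rewrite posrE.
- by rewrite posrE exprn_gt0.
rewrite lnXn // => h.
rewrite -mulrA -mulrN ler_wpM2l //.
rewrite mulr_natl; lra.
Qed.

Lemma entropy_ge (R : realType) (N F : nat) (A : finZmodType)
  (X : files_val N F A -> nat) (S : nat) : (1 < #|{: A}|)%N ->
  (forall m, #|[set w : files_val N F A | X w == m]| * #|{: A}| ^ S
      <= #|{: files_val N F A}|)%N ->
  S%:R <= entropy R X.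
Proof.
move=> a1 hc; rewrite /entropy.
set T := #|{: files_val N F A}|.
set a := #|{: A}|.
set s := undup _.
have Tpos : (0 < T)%N.
  by rewrite /T card_ffun expn_gt0 (ltn_trans _ a1).
have Tr : (0 : R) < T%:R by rewrite ltr0n.
have sum1 : \sum_(m <- s) (#|[set w : files_val N F A | X w == m]|%:R / T%:R : R) = 1.
  by rewrite -mulr_suml -natr_sum part_sum divff // gt_eqF.
have eS : S%:R = \sum_(m <- s) (#|[set w : files_val N F A | X w == m]|%:R / T%:R * S%:R : R).
  by rewrite -mulr_suml sum1 mul1r.
rewrite {1}eS.
apply: ler_sum => m _.
have -> : #|[set w : files_val N F A | X w == m]%classic| = #|[set w : files_val N F A | X w == m]|.
  by apply: eq_card => w; rewrite !inE /in_mem /= /in_set asboolb.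
apply: term_ge; first by rewrite ltr1n.
  by rewrite divr_ge0.
rewrite -natrX mulrAC ler_pdivrMr // mul1r -natrM ler_nat.
exact: hc.
Qed.

Lemma count_inj (N F : nat) (A : finZmodType) (D : {set 'I_N * 'I_F})
  (P : {set files_val N F A}) :
  (forall w w', w \in P -> w' \in P -> (forall p, p \notin D -> w p = w' p) -> w = w') ->
  (#|P| * #|{: A}| ^ #|D| <= #|{: files_val N F A}|)%N.
Proof.
move=> hinj.
pose G := [set g : files_val N F A | g \in pffun_on (0 : A) D predT].
have cG : #|G| = (#|{: A}| ^ #|D|)%N.
  rewrite -(card_pffun_on (0 : A) D predT).
  by apply: eq_card => g; rewrite inE.
pose f (x : files_val N F A * files_val N F A) : files_val N F A :=
  [ffun p => if p \in D then x.2 p else x.1 p].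
rewrite -cG -cardsX -(@card_in_imset _ _ f); first exact: max_card.
move=> [w g] [w' g'] /setXP [/= Pw Gg] /setXP [/= Pw' Gg'] /= hf.
have hp : forall p, f (w, g) p = f (w', g') p by move=> p; rewrite hf.
have ew : w = w'.
  apply: hinj => // p pD; have := hp p; rewrite !ffunE /=.
  by rewrite (negbTE pD).
rewrite ew; congr pair.
move: Gg Gg'; rewrite !inE => /pffun_onP [sg _] /pffun_onP [sg' _].
apply/ffunP => p; have [pD|pD] := boolP (p \in D).
  by have := hp p; rewrite !ffunE /= pD.
by rewrite (supportP sg) // (supportP sg').
Qed.

Definition inD (K F N' : nat) (E : 'I_K -> 'I_F -> bool) (u : 'I_N' -> 'I_K)
  (i : nat) (f : 'I_F) : bool :=
  (i < N')%N && [forall i' : 'I_N', (i' <= i)%N ==> E (u i') f].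

Arguments inD {K F N'} E u i f.

Lemma cardD (K N F N' : nat) (E : 'I_K -> 'I_F -> bool) (u : 'I_N' -> 'I_K) :
  (N' <= N)%N ->
  #|[set p : 'I_N * 'I_F | inD E u p.1 p.2]| = (\sum_(j < N') rho E u j)%N.
Proof.
move=> HN.
pose h (i : nat) := #|[set f : 'I_F | inD E u i f]|.
have -> : (\sum_(j < N') rho E u j = \sum_(j < N') h j)%N.
  apply: eq_bigr => j _; apply: eq_card => f.
  by rewrite !inE /in_mem /= /in_set ?asboolb /inD ltn_ord.
rewrite (big_ord_widen N h HN).
rewrite -sum1_card.
rewrite (eq_bigl (fun p : 'I_N * 'I_F => true && inD E u p.1 p.2)); last first.
  by move=> p; rewrite inE.
rewrite -(pair_big_dep xpredT (fun (i : 'I_N) (f : 'I_F) => inD E u i f) (fun _ _ => 1%N)) /=.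
rewrite [RHS]big_mkcond /=; apply: eq_bigr => i _.
rewrite sum1_card /h.
case: ifP => // hi.
  by apply: eq_card => f; rewrite inE /inD hi.
by apply: eq_card0.
Qed.

Lemma main_bound (R : realType) (K N F : nat) (A : finZmodType)
  (E : 'I_K -> 'I_F -> bool) (N' : nat) (u : 'I_N' -> 'I_K)
  (HN : (N' <= N)%N) (d : {ffun 'I_K -> 'I_N})
  (hd : forall j, d (u j) = widen_ord HN j)
  (X : files_val N F A -> nat)
  (dec : 'I_K -> nat -> files_val N F A -> {ffun 'I_F -> A})
  (hdec : forall k w, dec k (X w) (cache E k w) = file w (d k)) :
  (1 < #|{: A}|)%N ->
  (\sum_(j < N') rho E u j)%:R <= entropy R X.
Proof.
move=> a1.
rewrite -(@cardD K N F N' E u HN).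
apply: entropy_ge => // m.
apply: count_inj => w w'; rewrite !inE => /eqP Xw /eqP Xw' hoff.
have claim : forall n (j : 'I_N'), (j < n)%N ->
    file w (widen_ord HN j) = file w' (widen_ord HN j).
  elim=> [//|n IH] j; rewrite ltnS leq_eqVlt => /orP [/eqP ejn|]; last exact: IH.
  have hc : cache E (u j) w = cache E (u j) w'.
    apply/ffunP => [[i f]]; rewrite !ffunE /=.
    case: ifP => // Ef.
    have [pD|pD] := boolP ((i, f) \in [set p : 'I_N * 'I_F | inD E u p.1 p.2]); last first.
      exact: hoff.
    move: pD; rewrite inE /= /inD => /andP [iN /forallP hall].
    have ij : (i < j)%N.
      rewrite ltnNge; apply/negP => ji.
      by have := hall j; rewrite ji Ef.
    have := IH (Ordinal iN); rewrite -ejn => /(_ ij) /ffunP /(_ f).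
    rewrite !ffunE.
    have -> : widen_ord HN (Ordinal iN) = i by apply: val_inj.
    by [].
  by rewrite -hd -!hdec Xw' -Xw hc.
apply/ffunP => [[i f]].
have [pD|pD] := boolP ((i, f) \in [set p : 'I_N * 'I_F | inD E u p.1 p.2]); last first.
  exact: hoff.
move: pD; rewrite inE /= /inD => /andP [iN _].
have := claim N' (Ordinal iN) iN => /ffunP /(_ f); rewrite !ffunE.
have -> : widen_ord HN (Ordinal iN) = i by apply: val_inj.
by [].
Qed.

Theorem theorem8 (R : realType) (K N F : nat) (A : finZmodType)
  (E : 'I_K -> 'I_F -> bool) (N' : nat) (u : 'I_N' -> 'I_K) :
  (1 < #|{: A}|)%N ->
  caching_graph E ->
  (N' <= N)%N ->
  injective u ->
  (\sum_(j < N') rho E u j)%:R <= @opt_rate R K N F A E * F%:R.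
Proof.
move=> a1 _ HN uinj.
set S := (\sum_(j < N') rho E u j)%N.
have [[d0 _]|nod] := pselect (exists d0 : {ffun 'I_K -> 'I_N}, True); last first.
  have N0 : N = 0%N.
    case: N HN nod => // n _ nod; exfalso; apply: nod.
    by exists [ffun=> ord0].
  have S0 : S = 0%N.
    rewrite /S; move: HN; rewrite N0 leqn0 => /eqP N'0.
    by apply: big1 => j _; have := ltn_ord j; rewrite {2}N'0.
  rewrite S0 /opt_rate inf_out ?mul0r //.
  move=> [_ [x hx]].
  have : x <= x - 1 by apply: hx => d; exfalso; apply: nod; exists d.
  by rewrite lerBrDl addrC -lerBrDl subrr ler10.
pose d : {ffun 'I_K -> 'I_N} :=
  [ffun k => if [pick j | u j == k] is Some j then widen_ord HN j else d0 k].
have hd : forall j, d (u j) = widen_ord HN j.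
  move=> j; rewrite ffunE; case: pickP => [j' /eqP /uinj -> //|].
  by move=> /(_ j); rewrite eqxx.
have lbS : forall r, @achievable R K N F A E r -> S%:R <= r * F%:R.
  move=> r /(_ d) [X [hX [dec hdec]]].
  apply: le_trans hX.
  exact: (@main_bound R K N F A E N' u HN d hd X dec hdec a1).
have [F0|Fpos] := posnP F.
  have S0 : S = 0%N.
    rewrite /S big1 // => j _.
    apply/eqP; rewrite -leqn0.
    by apply: leq_trans (max_card _) _; rewrite card_ord F0.
  have -> : (F%:R : R) = 0 by rewrite F0.
  by rewrite S0 mulr0.
have Fr : (0 : R) < F%:R by rewrite ltr0n.
rewrite -ler_pdivrMr //.
apply: lb_le_inf.
  pose w0 : files_val N F A := [ffun=> 0].
  pose Xp := fun w : files_val N F A => pickle w.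
  exists (entropy R Xp / F%:R).
  move=> dd; exists Xp; split.
    by rewrite divfK // gt_eqF.
  exists (fun k m _ => file (odflt w0 (unpickle m)) (dd k)).
  by move=> k w; rewrite /Xp pickleK.
move=> r hr; rewrite ler_pdivrMr //; exact: lbS.
Qed.
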